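(* For every real number $x$, \[ |\cos x|\le \frac{2}{3}+\frac{7}{18}\cos 2x-\frac{1}{18}\cos 4x. \] *)

(* Defs.v *)
From Stdlib Require Import Reals.

(* Main.v *)
Require Import Defs.
From Stdlib Require Import Reals Lra Psatz.
Open Scope R_scope.

Theorem lemma2p1 : forall x : R,
  Rabs (cos x) <= 2 / 3 + 7 / 18 * cos (2 * x) - 1 / 18 * cos (4 * x).
Proof.
  intro x.
  assert (H4 : cos (4 * x) = 2 * cos (2 * x) ^ 2 - 1).
  { replace (4 * x) with (2 * (2 * x)) by ring. rewrite cos_2a_cos. ring. }
  rewrite H4, cos_2a_cos.
  set (s := Rabs (cos x)).
  assert (Hs : cos x * cos x = s * s).
  { unfold s. rewrite <- Rabs_mult. rewrite Rabs_right. reflexivity.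
    apply Rle_ge, Rle_0_sqr. }
  assert (Hs0 : 0 <= s) by apply Rabs_pos.
  assert (Hs1 : s <= 1) by (apply Rabs_le; apply COS_bound).
  replace (2 * cos x * cos x) with (2 * (cos x * cos x)) by ring.
  rewrite Hs.
  assert (0 <= (2*s-1)^2 * (1-s) * (s+2)).
  { apply Rmult_le_pos; [apply Rmult_le_pos; [apply pow2_ge_0|lra]|lra]. }
  nra.
Qed.
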